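(* Let $\kappa$ be a regular uncountable cardinal and let $\langle T^\eta\mid\eta<\kappa\rangle$ be a sequence of streamlined $\kappa$-subtrees of a given streamlined $\kappa$-Souslin tree $T$. Then there are $\eta<\rho<\kappa$ such that $|T^\eta\cap T^\rho|=\kappa$.
   Context: $H_\kappa$ is the collection of sets of hereditary cardinality $<\kappa$. A streamlined tree is a set $T\subseteq{}^{<\kappa}H_\kappa$ closed under restrictions $t\mapsto t\restriction\beta$, ordered by proper initial segment; $T_\alpha=\{x\in T\mid\mathrm{dom}(x)=\alpha\}$. A streamlined $\kappa$-tree satisfies $0<|T_\alpha|<\kappa$ for all $\alpha<\kappa$; a streamlined $\kappa$-subtree of $T$ is a downward-closed subset of $T$ that is itself a streamlined $\kappa$-tree. A streamlined $\kappa$-Souslin tree is a streamlined $\kappa$-tree with no $f:\kappa\to H_\kappa$ such that $f\restriction\beta\in T$ for all $\beta<\kappa$, and with no antichain (set of pairwise $\subseteq$-incomparable nodes) of size $\kappa$. *)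

(* Defs.v *)
From Stdlib Require Import Classical.

(* ---------- The cardinal kappa ----------
   kappa is represented by a type K of ordinals (the ordinals < kappa),
   strictly well-ordered by lt. *)

Definition card_ge_kappa {K U : Type} (A : U -> Prop) : Prop :=
  exists f : K -> U, (forall k, A (f k)) /\ (forall k1 k2, f k1 = f k2 -> k1 = k2).

Definition card_le_kappa {K U : Type} (A : U -> Prop) : Prop :=
  exists g : U -> K, forall a b, A a -> A b -> g a = g b -> a = b.

Definition card_lt_kappa {K U : Type} (A : U -> Prop) : Prop :=
  ~ @card_ge_kappa K U A.

Definition card_eq_kappa {K U : Type} (A : U -> Prop) : Prop :=
  @card_ge_kappa K U A /\ @card_le_kappa K U A.

Definition strict_well_order {K : Type} (lt : K -> K -> Prop) : Prop :=
  (forall a, ~ lt a a) /\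
  (forall a b c, lt a b -> lt b c -> lt a c) /\
  (forall a b, lt a b \/ a = b \/ lt b a) /\
  well_founded lt.

Definition regular_uncountable_cardinal (K : Type) (lt : K -> K -> Prop) : Prop :=
  strict_well_order lt /\
  (* kappa is a cardinal: every proper initial segment has size < kappa *)
  (forall a : K, @card_lt_kappa K K (fun b => lt b a)) /\
  (* regular: every subset of size < kappa is bounded below kappa *)
  (forall A : K -> Prop, @card_lt_kappa K K A -> exists a, forall b, A b -> lt b a) /\
  (~ exists g : K -> nat, forall a b, g a = g b -> a = b).

(* ---------- Streamlined trees ----------
   A node x : alpha -> X (alpha < kappa) is encoded as a partial function
   t : K -> option X whose domain {beta | t beta <> None} is exactly
   {beta | beta < alpha}. *)

Section Trees.
Context {K X : Type} (lt : K -> K -> Prop).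

Definition node := K -> option X.

Definition has_dom (t : node) (alpha : K) : Prop :=
  forall beta, t beta <> None <-> lt beta alpha.

Definition is_restr (t : node) (beta : K) (s : node) : Prop :=
  forall gamma, (lt gamma beta -> s gamma = t gamma) /\
                (~ lt gamma beta -> s gamma = None).

Definition initseg (s t : node) : Prop :=
  forall gamma, s gamma <> None -> s gamma = t gamma.

Definition streamlined_tree (T : node -> Prop) : Prop :=
  (forall t, T t -> exists alpha, has_dom t alpha) /\
  (forall t beta s, T t -> is_restr t beta s -> T s).

Definition level (T : node -> Prop) (alpha : K) : node -> Prop :=
  fun t => T t /\ has_dom t alpha.

Definition streamlined_kappa_tree (T : node -> Prop) : Prop :=
  streamlined_tree T /\
  (forall alpha, (exists t, level T alpha t) /\
                 @card_lt_kappa K node (level T alpha)).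

Definition streamlined_kappa_subtree (T S : node -> Prop) : Prop :=
  (forall t, S t -> T t) /\
  (forall s t, S t -> T s -> initseg s t -> S s) /\
  streamlined_kappa_tree S.

Definition is_branch (T : node -> Prop) (f : K -> X) : Prop :=
  forall beta, exists s, T s /\
    forall gamma, (lt gamma beta -> s gamma = Some (f gamma)) /\
                  (~ lt gamma beta -> s gamma = None).

Definition antichain (T A : node -> Prop) : Prop :=
  (forall t, A t -> T t) /\
  (forall s t, A s -> A t -> s <> t -> ~ initseg s t /\ ~ initseg t s).

Definition streamlined_kappa_Souslin_tree (T : node -> Prop) : Prop :=
  streamlined_kappa_tree T /\
  (~ exists f : K -> X, is_branch T f) /\
  (~ exists A : node -> Prop, antichain T A /\ @card_eq_kappa K node A).

End Trees.

(* Main.v *)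
Require Import Defs.
From Stdlib Require Import Classical ClassicalEpsilon FunctionalExtensionality IndefiniteDescription PropExtensionality.

Section Card.
Variable K : Type.
Variable lt : K -> K -> Prop.
Variable X : Type.
Hypothesis Hwo : strict_well_order lt.
Hypothesis Htwo : exists a b : K, a <> b.
Hypothesis Hcard : forall a : K, ~ @card_ge_kappa K K (fun b => lt b a).
Hypothesis Hreg : forall A : K -> Prop, ~ @card_ge_kappa K K A -> exists a, forall b, A b -> lt b a.

Lemma lt_irr : forall a, ~ lt a a. Proof. apply Hwo. Qed.
Lemma lt_trans : forall a b c, lt a b -> lt b c -> lt a c. Proof. apply Hwo. Qed.
Lemma lt_tri : forall a b, lt a b \/ a = b \/ lt b a. Proof. apply Hwo. Qed.
Lemma lt_wf : well_founded lt. Proof. apply Hwo. Qed.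

Lemma K_inh : inhabited K.
Proof. destruct Htwo as [a _]. exact (inhabits a). Qed.

Lemma wf_min : forall P : K -> Prop, (exists x, P x) -> exists m, P m /\ forall y, P y -> ~ lt y m.
Proof.
  intros P [x Hx]. revert Hx. induction x as [x IH] using (well_founded_ind lt_wf).
  intro Hx. destruct (classic (exists y, P y /\ lt y x)) as [[y [Py Hy]]|Hn].
  - exact (IH y Hy Py).
  - exists x. split; auto. intros y Py Hy. apply Hn. eauto.
Qed.

Lemma small_sub : forall (U : Type) (A B : U -> Prop), (forall u, A u -> B u) ->
  ~ @card_ge_kappa K U B -> ~ @card_ge_kappa K U A.
Proof. intros U A B HAB HB [f [Hf1 Hf2]]. apply HB. exists f. split; auto. Qed.

Lemma image_small : forall (U V : Type) (g : U -> V) (A : U -> Prop),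
  ~ @card_ge_kappa K U A -> ~ @card_ge_kappa K V (fun v => exists a, A a /\ g a = v).
Proof.
  intros U V g A HA [f [Hf1 Hf2]].
  destruct (functional_choice (fun k a => A a /\ g a = f k) Hf1) as [h Hh].
  apply HA. exists h. split.
  - intro k. apply Hh.
  - intros k1 k2 E. apply Hf2. destruct (Hh k1) as [_ E1]. destruct (Hh k2) as [_ E2].
    rewrite <- E1, <- E2, E. reflexivity.
Qed.

Lemma empty_small : forall (U : Type) (A : U -> Prop), (forall u, ~ A u) -> ~ @card_ge_kappa K U A.
Proof. intros U A H [f [Hf1 _]]. destruct Htwo as [a _]. exact (H _ (Hf1 a)). Qed.

Lemma singleton_small : forall (U : Type) (u : U), ~ @card_ge_kappa K U (fun v => v = u).
Proof.
  intros U u [f [Hf1 Hf2]]. destruct Htwo as [a [b Hab]]. apply Hab. apply Hf2.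
  rewrite (Hf1 a), (Hf1 b). reflexivity.
Qed.

Lemma succ_ex : forall a, exists g, lt a g.
Proof.
  intro a. destruct (Hreg _ (singleton_small K a)) as [g Hg]. exists g. apply Hg. reflexivity.
Qed.

Lemma union_small : forall (I U : Type) (Iset : I -> Prop) (A : U -> Prop) (r : U -> I),
  ~ @card_ge_kappa K I Iset -> (forall a, A a -> Iset (r a)) ->
  (forall i, Iset i -> ~ @card_ge_kappa K U (fun a => A a /\ r a = i)) ->
  ~ @card_ge_kappa K U A.
Proof.
  intros I U Iset A r HI Hr Hfib [f [Hf1 Hf2]].
  assert (Hb : forall i, exists c, Iset i -> forall k, r (f k) = i -> lt k c).
  { intro i. destruct (classic (Iset i)) as [Hi|Hi].
    - assert (Hs : ~ @card_ge_kappa K K (fun k => r (f k) = i)).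
      { intros [g [Hg1 Hg2]]. apply (Hfib i Hi). exists (fun k => f (g k)). split.
        - intro k. split; auto.
        - intros k1 k2 E. apply Hg2. apply Hf2. exact E. }
      destruct (Hreg _ Hs) as [c Hc]. exists c. intros _ k Hk. apply Hc. exact Hk.
    - destruct Htwo as [a _]. exists a. intro H. contradiction. }
  destruct (functional_choice _ Hb) as [b Hbb].
  destruct (Hreg _ (image_small I K b Iset HI)) as [c Hc].
  assert (H1 : lt c (b (r (f c)))). { apply Hbb; auto. }
  assert (H2 : lt (b (r (f c))) c). { apply Hc. exists (r (f c)). split; auto. }
  exact (lt_irr c (lt_trans _ _ _ H1 H2)).
Qed.

Lemma le_small : forall (U : Type) (A : U -> Prop) (r : U -> K),
  (forall b, ~ @card_ge_kappa K U (fun a => A a /\ r a = b)) ->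
  forall al, ~ @card_ge_kappa K U (fun a => A a /\ ~ lt al (r a)).
Proof.
  intros U A r Hl al. destruct (succ_ex al) as [g Hg].
  apply (union_small K U (fun b => lt b g) _ r (Hcard g)).
  - intros a [_ Ha]. destruct (lt_tri (r a) al) as [H|[H|H]].
    + eauto using lt_trans.
    + rewrite H; auto.
    + contradiction.
  - intros i _. apply (small_sub _ _ (fun a => A a /\ r a = i)); [|apply Hl].
    intros a [[Ha _] Hr]. auto.
Qed.

Lemma enum_le : forall (U : Type) (u0 : U) (A : U -> Prop) (r : U -> K),
  (forall al, ~ @card_ge_kappa K U (fun a => A a /\ ~ lt al (r a))) ->
  @card_le_kappa K U A.
Proof.
  intros U u0 A r Hsm.
  set (cand := fun (prev : U -> Prop) a => A a /\ ~ prev a /\ forall b, A b -> ~ prev b -> ~ lt (r b) (r a)).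
  set (F := fun (k : K) (rec : forall j, lt j k -> U) =>
        epsilon (inhabits u0) (cand (fun a => exists j (h : lt j k), rec j h = a))).
  set (f := Fix lt_wf (fun _ => U) F).
  assert (Hf : forall k, f k = epsilon (inhabits u0) (cand (fun a => exists j, lt j k /\ f j = a))).
  { intro k. unfold f at 1. rewrite Fix_eq.
    - unfold F. f_equal. f_equal. apply functional_extensionality. intro a.
      apply propositional_extensionality. split.
      + intros [j [h E]]. exists j. split; auto.
      + intros [j [h E]]. exists j, h. exact E.
    - intros x g1 g2 Hg.
      assert (E : g1 = g2).
      { apply functional_extensionality_dep. intro y. apply functional_extensionality_dep. intro p.
        apply Hg. }
      rewrite E. reflexivity. }
  destruct (classic (forall a, A a -> exists k, f k = a)) as [Hall|Hn].
  - exists (fun a => epsilon K_inh (fun k => f k = a)).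
    intros a b Ha Hb E.
    pose proof (epsilon_spec K_inh (fun k => f k = a) (Hall a Ha)) as Ea.
    pose proof (epsilon_spec K_inh (fun k => f k = b) (Hall b Hb)) as Eb.
    simpl in Ea, Eb. rewrite <- Ea, <- Eb, E. reflexivity.
  - exfalso. apply not_all_ex_not in Hn. destruct Hn as [a Ha].
    apply imply_to_and in Ha. destruct Ha as [Ha Hni].
    assert (Hc : forall k, cand (fun a => exists j, lt j k /\ f j = a) (f k)).
    { intro k. rewrite Hf. apply epsilon_spec.
      destruct (wf_min (fun x => exists b, A b /\ ~ (exists j, lt j k /\ f j = b) /\ r b = x))
        as [m [[b [Hb1 [Hb2 Hb3]]] Hm]].
      { exists (r a). exists a. split; auto. split; auto. intros [j [_ E]]. apply Hni. eauto. }
      exists b. split; auto. split; auto. intros b' Hb' Hb'p Hlt.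
      apply (Hm (r b')); [exists b'; auto | rewrite <- Hb3; exact Hlt]. }
    apply (Hsm (r a)). exists f. split.
    + intro k. destruct (Hc k) as [H1 [H2 H3]]. split; auto.
      apply H3; auto. intros [j [_ E]]. apply Hni. eauto.
    + intros k1 k2 E. destruct (lt_tri k1 k2) as [H|[H|H]]; auto.
      * exfalso. destruct (Hc k2) as [_ [H2 _]]. apply H2. exists k1. auto.
      * exfalso. destruct (Hc k1) as [_ [H2 _]]. apply H2. exists k2. auto.
Qed.

Notation nd := (@node K X).
Notation ge A := (@card_ge_kappa K nd A).

Definition restr (t : nd) (b : K) : nd :=
  fun g => if excluded_middle_informative (lt g b) then t g else None.

Definition ht (t : nd) : K := epsilon (K_inh) (fun a => has_dom lt t a).

Lemma restr_is : forall (t : nd) b, is_restr lt t b (restr t b).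
Proof.
  intros t b g. unfold restr. destruct (excluded_middle_informative (lt g b)); split; intros; tauto.
Qed.

Lemma dom_unique : forall (t : nd) a b, has_dom lt t a -> has_dom lt t b -> a = b.
Proof.
  intros t a b Ha Hb. destruct (lt_tri a b) as [H|[H|H]]; auto; exfalso.
  - apply (lt_irr a). apply Ha. apply Hb. exact H.
  - apply (lt_irr b). apply Hb. apply Ha. exact H.
Qed.

Lemma ht_spec : forall (t : nd) a, has_dom lt t a -> has_dom lt t (ht t).
Proof. intros t a H. unfold ht. apply epsilon_spec. eauto. Qed.

Lemma ht_eq : forall (t : nd) a, has_dom lt t a -> ht t = a.
Proof. intros t a H. eapply dom_unique; [apply (ht_spec t a H)|exact H]. Qed.

Lemma restr_dom : forall (t : nd) a b, has_dom lt t a -> ~ lt a b -> has_dom lt (restr t b) b.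
Proof.
  intros t a b Ha Hab g. unfold restr.
  destruct (excluded_middle_informative (lt g b)) as [H|H]; split; intro H'; try tauto.
  apply Ha. destruct (lt_tri a b) as [E|[E|E]]; [tauto| subst; auto | eauto using lt_trans].
Qed.

Lemma restr_id : forall (t : nd) a b, has_dom lt t a -> ~ lt b a -> restr t b = t.
Proof.
  intros t a b Ha Hba. apply functional_extensionality. intro g. unfold restr.
  destruct (excluded_middle_informative (lt g b)) as [H|H]; auto.
  destruct (classic (t g = None)) as [E|E]; auto. exfalso.
  apply Ha in E. apply H. destruct (lt_tri b a) as [E'|[E'|E']]; [tauto|subst; auto|eauto using lt_trans].
Qed.

Lemma restr_restr : forall (t : nd) a b, lt a b -> restr (restr t b) a = restr t a.
Proof.
  intros t a b Hab. apply functional_extensionality. intro g. unfold restr.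
  destruct (excluded_middle_informative (lt g a)) as [H|H]; auto.
  destruct (excluded_middle_informative (lt g b)) as [H'|H']; auto.
  exfalso. eauto using lt_trans.
Qed.

Lemma initseg_restr : forall (t : nd) b, initseg (restr t b) t.
Proof.
  intros t b g H. unfold restr in *. destruct (excluded_middle_informative (lt g b)); tauto.
Qed.

Lemma initseg_le : forall (s t : nd) a b, initseg s t -> has_dom lt s a -> has_dom lt t b -> ~ lt b a.
Proof.
  intros s t a b Hst Ha Hb H. apply Ha in H. pose proof H as H2. apply Hst in H2.
  rewrite H2 in H. apply Hb in H. exact (lt_irr b H).
Qed.

Lemma initseg_eq_restr : forall (s t : nd) a, initseg s t -> has_dom lt s a -> s = restr t a.
Proof.
  intros s t a Hst Ha. apply functional_extensionality. intro g. unfold restr.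
  destruct (excluded_middle_informative (lt g a)) as [H|H].
  - apply Hst. apply Ha. exact H.
  - destruct (classic (s g = None)) as [E|E]; auto. apply Ha in E. contradiction.
Qed.

Lemma initseg_same : forall (s t : nd) a, initseg s t -> has_dom lt s a -> has_dom lt t a -> s = t.
Proof.
  intros s t a Hst Ha Hb. rewrite (initseg_eq_restr s t a Hst Ha). apply (restr_id t a a Hb).
  apply lt_irr; auto.
Qed.

Lemma initseg_trans : forall (s t : nd) u, initseg s t -> initseg t u -> initseg s u.
Proof.
  intros s t u H1 H2 g H. rewrite (H1 g H). apply H2. rewrite <- (H1 g H). exact H.
Qed.

Lemma initseg_refl : forall s : nd, initseg s s.
Proof. intros s g _. reflexivity. Qed.

Variable T : nd -> Prop.
Hypothesis HTt : streamlined_kappa_tree lt T.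

Lemma T_dom : forall t, T t -> has_dom lt t (ht t).
Proof. intros t H. destruct HTt as [[H1 _] _]. destruct (H1 t H) as [a Ha]. eapply ht_spec; eauto. Qed.

Lemma T_restr : forall (t : nd) b, T t -> T (restr t b).
Proof. intros t b H. destruct HTt as [[_ H2] _]. eapply H2; eauto. apply restr_is. Qed.

Lemma T_fib_small : forall b, ~ ge (fun a => T a /\ ht a = b).
Proof.
  intro b. apply (small_sub _ _ (level lt T b)).
  - intros a [Ha E]. split; auto. rewrite <- E. apply T_dom; auto.
  - destruct HTt as [_ H]. apply H.
Qed.

Lemma T_le_small : forall al, ~ ge (fun a => T a /\ ~ lt al (ht a)).
Proof. apply (le_small). apply T_fib_small. Qed.

Lemma T_le : @card_le_kappa K nd T.
Proof. apply (enum_le nd (fun _ => None) T ht). apply T_le_small. Qed.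

Lemma sub_le : forall A : nd -> Prop, (forall t, A t -> T t) -> @card_le_kappa K nd A.
Proof. intros A H. destruct T_le as [g Hg]. exists g. auto. Qed.

Definition cone (x : nd) : nd -> Prop := fun t => T t /\ initseg x t.

Lemma subtree_cone : 
  (~ exists A : nd -> Prop, antichain T A /\ @card_eq_kappa K nd A) ->
  forall S, streamlined_kappa_subtree lt T S ->
  exists x, S x /\ (forall t, cone x t -> S t) /\ ge (cone x).
Proof.
  intros Hsous S [HST [HSd HSk]].
  set (Amin := fun u => T u /\ ~ S u /\ forall b, lt b (ht u) -> S (restr u b)).
  assert (Hanti : forall s t, Amin s -> Amin t -> s <> t -> ~ initseg s t).
  { intros s t [Ts [Ss Ms]] [Tt [St Mt]] Hne Hst.
    pose proof (T_dom s Ts) as Ds. pose proof (T_dom t Tt) as Dt.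
    pose proof (initseg_le s t _ _ Hst Ds Dt) as Hle.
    destruct (lt_tri (ht s) (ht t)) as [H|[H|H]].
    - apply Ss. rewrite (initseg_eq_restr s t _ Hst Ds). apply Mt; auto.
    - apply Hne. rewrite H in Ds. eapply initseg_same; eauto.
    - contradiction. }
  assert (HAsmall : ~ ge Amin).
  { intro Hg. apply Hsous. exists Amin. split.
    - split; [intros t [H _]; exact H|]. intros s t Hs Ht Hne. split.
      + apply Hanti; auto.
      + apply Hanti; auto.
    - split; auto. apply sub_le. intros t [H _]; exact H. }
  destruct (Hreg _ (image_small nd K ht Amin HAsmall)) as [a0 Ha0].
  assert (HC : forall x, S x -> has_dom lt x a0 -> forall t, cone x t -> S t).
  { intros x Sx Dx t [Tt Hxt]. apply NNPP. intro Snt.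
    pose proof (T_dom t Tt) as Dt.
    destruct (wf_min (fun b => ~ lt (ht t) b /\ ~ S (restr t b))) as [m [[Hm1 Hm2] Hm]].
    { exists (ht t). split; [apply lt_irr; auto|]. rewrite (restr_id t (ht t)); auto. apply lt_irr; auto. }
    assert (Dm : has_dom lt (restr t m) m) by (eapply restr_dom; eauto).
    assert (HA : Amin (restr t m)).
    { split; [apply T_restr; auto|]. split; auto.
      intros b Hb. rewrite (ht_eq _ _ Dm) in Hb. rewrite restr_restr; auto.
      apply NNPP. intro Hn. apply (Hm b); auto. split; auto.
      intro H. apply Hm1. eauto using lt_trans. }
    assert (Hm0 : lt m a0). { rewrite <- (ht_eq _ _ Dm). apply Ha0. exists (restr t m). auto. }
    apply Hm2. rewrite <- (restr_restr t m a0 Hm0), <- (initseg_eq_restr x t a0 Hxt Dx).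
    apply (HSd _ x); auto.
    - apply T_restr; auto.
    - apply initseg_restr. }
  destruct HSk as [[HS1 HS2] HS3].
  assert (Hbig : exists x, S x /\ has_dom lt x a0 /\ ge (cone x)).
  { apply NNPP. intro Hn.
    assert (Hsm : ~ ge S).
    { apply (union_small nd nd (fun i => T i /\ exists a, has_dom lt i a /\ ~ lt a0 a) S
               (fun t => restr t a0)).
      - apply (small_sub _ _ (fun a => T a /\ ~ lt a0 (ht a))); [|apply T_le_small].
        intros i [Ti [a [Da Ha]]]. split; auto. rewrite (ht_eq _ _ Da). auto.
      - intros t St. split; [apply T_restr; auto|].
        pose proof (T_dom t (HST t St)) as Dt.
        destruct (classic (lt (ht t) a0)) as [H|H].
        + exists (ht t). rewrite (restr_id t (ht t)); auto.
          * split; auto. intro H'. apply (lt_irr a0). eauto using lt_trans.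
          * intro H'. apply (lt_irr a0). eauto using lt_trans.
        + exists a0. split; [eapply restr_dom; eauto| apply lt_irr; auto].
      - intros i [Ti [a [Da Ha]]].
        destruct (lt_tri a a0) as [H|[H|H]]; [| |contradiction].
        + apply (small_sub _ _ (fun v => v = i)); [|apply singleton_small; auto].
          intros u [Su Eu]. pose proof (T_dom u (HST u Su)) as Du.
          destruct (classic (lt (ht u) a0)) as [H'|H'].
          * rewrite (restr_id u (ht u)) in Eu; auto. intro H''. apply (lt_irr a0). eauto using lt_trans.
          * exfalso. assert (D2 : has_dom lt (restr u a0) a0) by (eapply restr_dom; eauto).
            rewrite Eu in D2. rewrite (dom_unique i a a0 Da D2) in H. apply (lt_irr a0 H).
        + subst a. destruct (classic (S i)) as [Si|Si].
          * apply (small_sub _ _ (cone i)).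
            -- intros u [Su Eu]. split; auto. rewrite <- Eu. apply initseg_restr.
            -- intro Hg. apply Hn. exists i. auto.
          * apply empty_small; auto. intros u [Su Eu]. apply Si. rewrite <- Eu.
            apply (HSd _ u); auto. apply T_restr; auto. apply initseg_restr. }
    apply Hsm.
    assert (Hl : forall b, exists s, level lt S b s). { intro b. apply HS3. }
    destruct (functional_choice _ Hl) as [f Hf]. exists f. split.
    - intro k. apply Hf.
    - intros k1 k2 E. destruct (Hf k1) as [_ D1]. destruct (Hf k2) as [_ D2].
      rewrite E in D1. eapply dom_unique; eauto. }
  destruct Hbig as [x [Sx [Dx Hx]]]. exists x. split; auto. split; auto. apply HC; auto.
Qed.

End Card.

Theorem proposition5p4 (K : Type) (lt : K -> K -> Prop) (X : Type)
  (Hkappa : regular_uncountable_cardinal K lt)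
  (T : @node K X -> Prop)
  (HT : streamlined_kappa_Souslin_tree lt T)
  (Tseq : K -> @node K X -> Prop)
  (Hseq : forall eta, streamlined_kappa_subtree lt T (Tseq eta)) :
  exists eta rho, lt eta rho /\
    @card_eq_kappa K (@node K X) (fun t => Tseq eta t /\ Tseq rho t).
Proof.
  destruct Hkappa as [Hwo [Hcard [Hreg Hunc]]].
  assert (Htwo : exists a b : K, a <> b).
  { apply NNPP. intro Hn. apply Hunc. exists (fun _ => 0). intros a b _.
    apply NNPP. intro Hab. apply Hn. eauto. }
  destruct HT as [HTt [_ Hsous]].
  apply NNPP. intro Hn.
  assert (Hsm : forall eta rho, lt eta rho ->
            ~ @card_ge_kappa K (@node K X) (fun t => Tseq eta t /\ Tseq rho t)).
  { intros eta rho H Hg. apply Hn. exists eta, rho. split; auto. split; auto.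
    apply (sub_le K lt X Hwo Htwo Hcard Hreg T HTt). intros t [Ht _].
    destruct (Hseq eta) as [H1 _]. auto. }
  assert (Hx : forall eta, exists x, Tseq eta x /\ (forall t, cone K X T x t -> Tseq eta t)
                 /\ @card_ge_kappa K (@node K X) (cone K X T x)).
  { intro eta. apply (subtree_cone K lt X Hwo Htwo Hcard Hreg T HTt Hsous). apply Hseq. }
  destruct (functional_choice _ Hx) as [xf Hxf].
  assert (Key : forall eta rho, eta <> rho -> initseg (xf eta) (xf rho) -> False).
  { intros eta rho Hne Hi.
    destruct (Hxf eta) as [_ [C1 _]]. destruct (Hxf rho) as [_ [C2 [f [Hf1 Hf2]]]].
    assert (Hg : forall eta' rho', (eta' = eta /\ rho' = rho) \/ (eta' = rho /\ rho' = eta) ->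
              @card_ge_kappa K (@node K X) (fun t => Tseq eta' t /\ Tseq rho' t)).
    { intros eta' rho' Hc. exists f. split; auto.
      intro k. destruct (Hf1 k) as [T1 I1].
      assert (A1 : Tseq eta (f k)). { apply C1. split; auto. eapply initseg_trans; eauto. }
      assert (A2 : Tseq rho (f k)). { apply C2. split; auto. }
      destruct Hc as [[E1 E2]|[E1 E2]]; subst; auto. }
    destruct (lt_tri K lt Hwo eta rho) as [H|[H|H]].
    - exact (Hsm _ _ H (Hg eta rho (or_introl (conj eq_refl eq_refl)))).
    - contradiction.
    - exact (Hsm _ _ H (Hg rho eta (or_intror (conj eq_refl eq_refl)))). }
  apply Hsous. exists (fun t => exists eta, xf eta = t). split.
  - split.
    + intros t [eta E]. subst. destruct (Hxf eta) as [S1 _]. destruct (Hseq eta) as [H1 _]. auto.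
    + intros s t [e1 E1] [e2 E2] Hne. subst.
      assert (e1 <> e2) by (intro; subst; auto).
      split; intro Hi; [apply (Key e1 e2)|apply (Key e2 e1)]; auto.
  - split.
    + exists xf. split; [intro k; exists k; auto|].
      intros k1 k2 E. apply NNPP. intro Hne. apply (Key k1 k2 Hne). rewrite E. apply initseg_refl.
    + apply (sub_le K lt X Hwo Htwo Hcard Hreg T HTt). intros t [eta E]. subst.
      destruct (Hxf eta) as [S1 _]. destruct (Hseq eta) as [H1 _]. auto.
Qed.
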